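(* For every circuit $c$ there is a safe circuit $d$ such that $c$ and $d$ are equal modulo $E$.
   Context: A circuit is a morphism of the free symmetric strict monoidal category whose objects are natural numbers (tensor = addition) generated by $\mathsf{discard}:1\to 0$, $\mathsf{copy}:1\to 2$, $\mathsf{zero}:0\to1$, $\mathsf{add}:2\to1$, $\mathsf{one}:0\to 1$, $\mathsf{and}:2\to 1$, considered up to the laws of symmetric monoidal categories. Composition is diagrammatic ($f;g$ = first $f$ then $g$), $\sigma$ is the symmetry $2\to2$, $\mathsf{copy}_n$, $\mathsf{discard}_n$ are the evident composites. $E$ is the set of equations: $\mathsf{copy};\sigma=\mathsf{copy}$; $\mathsf{copy};(\mathsf{copy}\otimes \mathrm{id}_1)=\mathsf{copy};(\mathrm{id}_1\otimes\mathsf{copy})$; $\mathsf{copy};(\mathsf{discard}\otimes\mathrm{id}_1)=\mathrm{id}_1$; for every circuit $f:a\to b$, $f;\mathsf{copy}_b=\mathsf{copy}_a;(f\otimes f)$ and $f;\mathsf{discard}_b=\mathsf{discard}_a$; commutativity, associativity and unit laws for $(\mathsf{add},\mathsf{zero})$ and for $(\mathsf{and},\mathsf{one})$; $\mathsf{copy};\mathsf{and}=\mathrm{id}_1$; $\mathsf{copy};\mathsf{add}=\mathsf{discard};\mathsf{zero}$; and distributivity $(\mathrm{id}_1\otimes\mathsf{add});\mathsf{and}=(\mathsf{copy}\otimes\mathrm{id}_2);(\mathrm{id}_1\otimes\sigma\otimes\mathrm{id}_1);(\mathsf{and}\otimes\mathsf{and});\mathsf{add}$. ''Equal modulo $E$''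 means related by the smallest congruence (w.r.t. composition and tensor) containing $E$; morphisms of the quotient are the boolean circuits, which correspond exactly to boolean functions $\mathbb{Z}_2^a\to\mathbb{Z}_2^b$ (with $\mathsf{add}$ = XOR, $\mathsf{and}$ = AND). View a circuit as a directed graph whose nodes are wires and whose edges go from each input wire of a generator occurrence to each of its output wires. A circuit $c$ is safe if for every occurrence of $\mathsf{and}$ in $c$, there is no input port of $c$ from which both input ports of that $\mathsf{and}$ are reachable by a forward path. *)

(* Defs.v *)
From Stdlib Require Import List Arith Relations.
Import ListNotations.

Inductive gen : Type := gDiscard | gCopy | gZero | gAdd | gOne | gAnd.

Definition gdom (g : gen) : nat :=
  match g with gDiscard => 1 | gCopy => 1 | gZero => 0 | gAdd => 2 | gOne => 0 | gAnd => 2 end.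
Definition gcod (g : gen) : nat :=
  match g with gDiscard => 0 | gCopy => 2 | gZero => 1 | gAdd => 1 | gOne => 1 | gAnd => 1 end.

(* Raw syntax: generators, identities id_n, symmetries sigma_{m,n} : m+n -> n+m,
   diagrammatic composition (TComp f g = f;g) and tensor. *)
Inductive term : Type :=
| TGen  (g : gen)
| TId   (n : nat)
| TSym  (m n : nat)
| TComp (f g : term)
| TTens (f g : term).

Fixpoint tdom (t : term) : nat :=
  match t with
  | TGen g => gdom g | TId n => n | TSym m n => m + n
  | TComp f _ => tdom f | TTens f g => tdom f + tdom g
  end.
Fixpoint tcod (t : term) : nat :=
  match t with
  | TGen g => gcod g | TId n => n | TSym m n => n + m
  | TComp _ g => tcod g | TTens f g => tcod f + tcod g
  end.

Fixpoint wt (t : term) : Prop :=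
  match t with
  | TComp f g => wt f /\ wt g /\ tcod f = tdom g
  | TTens f g => wt f /\ wt g
  | _ => True
  end.

Definition discard := TGen gDiscard.
Definition copy := TGen gCopy.
Definition zero := TGen gZero.
Definition add := TGen gAdd.
Definition one := TGen gOne.
Definition and := TGen gAnd.
Definition sigma := TSym 1 1.

Fixpoint copyn (n : nat) : term :=
  match n with
  | 0 => TId 0
  | S k => TComp (TTens copy (copyn k)) (TTens (TTens (TId 1) (TSym 1 k)) (TId k))
  end.
Fixpoint discardn (n : nat) : term :=
  match n with
  | 0 => TId 0
  | S k => TTens discard (discardn k)
  end.

Inductive eqE : term -> term -> Prop :=
| eq_refl t : wt t -> eqE t t
| eq_sym t u : eqE t u -> eqE u t
| eq_trans t u v : eqE t u -> eqE u v -> eqE t v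
| eq_comp f f' g g' : eqE f f' -> eqE g g' -> tcod f = tdom g ->
    eqE (TComp f g) (TComp f' g')
| eq_tens f f' g g' : eqE f f' -> eqE g g' -> eqE (TTens f g) (TTens f' g')
| smc_assoc f g h : wt f -> wt g -> wt h -> tcod f = tdom g -> tcod g = tdom h ->
    eqE (TComp (TComp f g) h) (TComp f (TComp g h))
| smc_idl f : wt f -> eqE (TComp (TId (tdom f)) f) f
| smc_idr f : wt f -> eqE (TComp f (TId (tcod f))) f
| smc_tassoc f g h : wt f -> wt g -> wt h ->
    eqE (TTens (TTens f g) h) (TTens f (TTens g h))
| smc_tunitl f : wt f -> eqE (TTens (TId 0) f) f
| smc_tunitr f : wt f -> eqE (TTens f (TId 0)) f
| smc_tid m n : eqE (TTens (TId m) (TId n)) (TId (m + n))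
| smc_interchange f g h k : wt f -> wt g -> wt h -> wt k ->
    tcod f = tdom g -> tcod h = tdom k ->
    eqE (TComp (TTens f h) (TTens g k)) (TTens (TComp f g) (TComp h k))
| smc_symsym m n : eqE (TComp (TSym m n) (TSym n m)) (TId (m + n))
| smc_symnat f g : wt f -> wt g ->
    eqE (TComp (TTens f g) (TSym (tcod f) (tcod g)))
        (TComp (TSym (tdom f) (tdom g)) (TTens g f))
| smc_hex1 m n p :
    eqE (TSym m (n + p)) (TComp (TTens (TSym m n) (TId p)) (TTens (TId n) (TSym m p)))
| smc_hex2 m n p :
    eqE (TSym (m + n) p) (TComp (TTens (TId m) (TSym n p)) (TTens (TSym m p) (TId n)))
| smc_sym0l n : eqE (TSym 0 n) (TId n)
| smc_sym0r n : eqE (TSym n 0) (TId n)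
| E_cocomm : eqE (TComp copy sigma) copy
| E_coassoc : eqE (TComp copy (TTens copy (TId 1))) (TComp copy (TTens (TId 1) copy))
| E_counit : eqE (TComp copy (TTens discard (TId 1))) (TId 1)
| E_copynat f : wt f ->
    eqE (TComp f (copyn (tcod f))) (TComp (copyn (tdom f)) (TTens f f))
| E_discardnat f : wt f -> eqE (TComp f (discardn (tcod f))) (discardn (tdom f))
| E_add_comm : eqE (TComp sigma add) add
| E_add_assoc : eqE (TComp (TTens add (TId 1)) add) (TComp (TTens (TId 1) add) add)
| E_add_unitl : eqE (TComp (TTens zero (TId 1)) add) (TId 1)
| E_add_unitr : eqE (TComp (TTens (TId 1) zero) add) (TId 1)
| E_and_comm : eqE (TComp sigma and) and
| E_and_assoc : eqE (TComp (TTens and (TId 1)) and) (TComp (TTens (TId 1) and) and)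
| E_and_unitl : eqE (TComp (TTens one (TId 1)) and) (TId 1)
| E_and_unitr : eqE (TComp (TTens (TId 1) one) and) (TId 1)
| E_and_idem : eqE (TComp copy and) (TId 1)
| E_add_nil : eqE (TComp copy add) (TComp discard zero)
| E_distr :
    eqE (TComp (TTens (TId 1) add) and)
        (TComp (TComp (TComp (TTens copy (TId 2)) (TTens (TTens (TId 1) sigma) (TId 1)))
                      (TTens and and)) add).

(* The wire graph of a circuit.  [flat t ins fr] threads wire names:
   [ins] are the names of the input wires of t, [fr] the next fresh name;
   it returns the output wire names, the list of generator occurrences
   (generator, its input wires, its output wires), and the next fresh name. *)
Fixpoint flat (t : term) (ins : list nat) (fr : nat)
  : list nat * list (gen * list nat * list nat) * nat :=
  match t with
  | TGen g => let outs := seq fr (gcod g) in (outs, [(g, ins, outs)], fr + gcod g)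
  | TId _ => (ins, [], fr)
  | TSym m _ => (skipn m ins ++ firstn m ins, [], fr)
  | TComp f g =>
      let '(o1, oc1, fr1) := flat f ins fr in
      let '(o2, oc2, fr2) := flat g o1 fr1 in
      (o2, oc1 ++ oc2, fr2)
  | TTens f g =>
      let '(o1, oc1, fr1) := flat f (firstn (tdom f) ins) fr in
      let '(o2, oc2, fr2) := flat g (skipn (tdom f) ins) fr1 in
      (o1 ++ o2, oc1 ++ oc2, fr2)
  end.

(* input ports of t are the wires 0, ..., tdom t - 1 *)
Definition occs (t : term) : list (gen * list nat * list nat) :=
  snd (fst (flat t (seq 0 (tdom t)) (tdom t))).

Definition edge (t : term) (x y : nat) : Prop :=
  exists g ins outs, In (g, ins, outs) (occs t) /\ In x ins /\ In y outs.

Definition reach (t : term) : nat -> nat -> Prop := clos_refl_trans nat (edge t).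

Definition safe (t : term) : Prop :=
  forall p q outs, In (gAnd, [p; q], outs) (occs t) ->
    forall i, i < tdom t -> ~ (reach t i p /\ reach t i q).

(* Main.v *)
Require Import Defs.
From Stdlib Require Import List Arith Relations Lia Setoid Morphisms.
Import ListNotations.

Lemma copyn_ty n : wt (copyn n) /\ tdom (copyn n) = n /\ tcod (copyn n) = n + n.
Proof. induction n; simpl; intuition lia. Qed.
Lemma discardn_ty n : wt (discardn n) /\ tdom (discardn n) = n /\ tcod (discardn n) = 0.
Proof. induction n; simpl; intuition lia. Qed.
Lemma tdom_copyn n : tdom (copyn n) = n. Proof. apply copyn_ty. Qed.
Lemma tcod_copyn n : tcod (copyn n) = n + n. Proof. apply copyn_ty. Qed.
Lemma tdom_discardn n : tdom (discardn n) = n. Proof. apply discardn_ty. Qed.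
Lemma tcod_discardn n : tcod (discardn n) = 0. Proof. apply discardn_ty. Qed.
Lemma wt_copyn n : wt (copyn n). Proof. apply copyn_ty. Qed.
Lemma wt_discardn n : wt (discardn n). Proof. apply discardn_ty. Qed.
Hint Rewrite tdom_copyn tcod_copyn tdom_discardn tcod_discardn : tdb.

Lemma eqE_wt t u : eqE t u -> wt t /\ wt u /\ tdom t = tdom u /\ tcod t = tcod u.
Proof.
  induction 1; simpl in *; autorewrite with tdb in *;
  repeat match goal with H : _ /\ _ |- _ => destruct H end;
  repeat split; auto using wt_copyn, wt_discardn; try lia.
Qed.
Infix ";;" := TComp (at level 45, left associativity).
Infix "**" := TTens (at level 41, left associativity).
Definition Q (t u : term) : Prop := (wt t \/ wt u) -> eqE t u.

Lemma Q_eqE t u : eqE t u -> Q t u. Proof. intros H _; exact H. Qed.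
Lemma eqE_Q t u : wt t -> Q t u -> eqE t u. Proof. intros H1 H2; apply H2; auto. Qed.

Instance Q_Equiv : Equivalence Q.
Proof.
  split.
  - intros t [H|H]; apply eq_refl; auto.
  - intros t u H [H1|H1]; apply eq_sym, H; auto.
  - intros t u v H1 H2 [H|H].
    + assert (E1 := H1 (or_introl H)). destruct (eqE_wt _ _ E1) as (_&Hu&_).
      eapply eq_trans; eauto.
    + assert (E2 := H2 (or_intror H)). destruct (eqE_wt _ _ E2) as (Hu&_).
      eapply eq_trans; eauto.
Qed.

Instance TComp_Q : Proper (Q ==> Q ==> Q) TComp.
Proof.
  intros f f' Hf g g' Hg [H|H]; simpl in H.
  - destruct H as (A&B&C). assert (E1 := Hf (or_introl A)). assert (E2 := Hg (or_introl B)).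
    apply eq_comp; auto.
  - destruct H as (A&B&C). assert (E1 := Hf (or_intror A)). assert (E2 := Hg (or_intror B)).
    apply eq_comp; auto. destruct (eqE_wt _ _ E1) as (_&_&_&X); destruct (eqE_wt _ _ E2) as (_&_&Y&_); lia.
Qed.

Instance TTens_Q : Proper (Q ==> Q ==> Q) TTens.
Proof.
  intros f f' Hf g g' Hg [H|H]; simpl in H; destruct H as (A&B); apply eq_tens; auto.
Qed.

Ltac tc := simpl; autorewrite with tdb; simpl; try lia.

Lemma Qassoc f g h : Q ((f;;g);;h) (f;;(g;;h)).
Proof. intros [H|H]; simpl in H; apply smc_assoc; intuition. Qed.
Lemma Qidl n f : n = tdom f -> Q (TId n ;; f) f.
Proof. intros -> [H|H]; simpl in H; apply smc_idl; intuition. Qed.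
Lemma Qidr n f : n = tcod f -> Q (f ;; TId n) f.
Proof. intros -> [H|H]; simpl in H; apply smc_idr; intuition. Qed.
Lemma Qtassoc f g h : Q ((f**g)**h) (f**(g**h)).
Proof. intros [H|H]; simpl in H; apply smc_tassoc; intuition. Qed.
Lemma Qtunitl f : Q (TId 0 ** f) f.
Proof. intros [H|H]; simpl in H; apply smc_tunitl; intuition. Qed.
Lemma Qtunitr f : Q (f ** TId 0) f.
Proof. intros [H|H]; simpl in H; apply smc_tunitr; intuition. Qed.
Lemma Qtid m n k : k = m + n -> Q (TId m ** TId n) (TId k).
Proof. intros ->; apply Q_eqE, smc_tid. Qed.
Lemma Qinter f g h k : tcod f = tdom g -> Q ((f**h);;(g**k)) ((f;;g)**(h;;k)).
Proof. intros E [H|H]; simpl in H; apply smc_interchange; intuition lia. Qed.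
Lemma Qsymsym m n k : k = m + n -> Q (TSym m n ;; TSym n m) (TId k).
Proof. intros ->; apply Q_eqE, smc_symsym. Qed.
Lemma Qsymnat f g a b c d : a = tcod f -> b = tcod g -> c = tdom f -> d = tdom g ->
  Q ((f**g) ;; TSym a b) (TSym c d ;; (g ** f)).
Proof. intros -> -> -> -> [H|H]; simpl in H; apply smc_symnat; intuition. Qed.
Lemma Qsym0l n : Q (TSym 0 n) (TId n). Proof. apply Q_eqE, smc_sym0l. Qed.
Lemma Qsym0r n : Q (TSym n 0) (TId n). Proof. apply Q_eqE, smc_sym0r. Qed.
Lemma Qcopynat f a b : a = tdom f -> b = tcod f -> Q (f ;; copyn b) (copyn a ;; (f ** f)).
Proof. intros -> -> [H|H]; simpl in H; autorewrite with tdb in H; apply E_copynat; intuition. Qed.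
Lemma Qdiscnat f a b : wt f -> a = tdom f -> b = tcod f -> Q (f ;; discardn b) (discardn a).
Proof. intros W -> -> _; apply E_discardnat; auto. Qed.

Lemma counitL : Q (copy ;; (discard ** TId 1)) (TId 1).
Proof. apply Q_eqE, E_counit. Qed.
Lemma counitR : Q (copy ;; (TId 1 ** discard)) (TId 1).
Proof.
  rewrite <- (Q_eqE _ _ E_cocomm). rewrite Qassoc. unfold sigma.
  rewrite <- (Qsymnat discard (TId 1)) by reflexivity.
  rewrite Qsym0l, Qidr by reflexivity. apply counitL.
Qed.

Lemma copyn1 : Q (copyn 1) copy.
Proof.
  simpl. rewrite Qsym0r, Qtunitr, (Qtid 1 1 2), Qtunitr by reflexivity.
  apply Qidr. reflexivity.
Qed.
Lemma disc1 : Q (discardn 1) discard.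
Proof. simpl. apply Qtunitr. Qed.
Lemma M4 u v u' v' a b a' b' p q p' q' :
  tdom u = a -> tdom v = b -> tdom u' = a' -> tdom v' = b' ->
  tcod u = p -> tcod v = q -> tcod u' = p' -> tcod v' = q' ->
  Q ((u ** v) ** (u' ** v'))
    ((TId a ** TSym b a') ** TId b' ;; (((u ** u') ** (v ** v')) ;; ((TId p ** TSym p' q) ** TId q'))).
Proof.
  intros Ha Hb Ha' Hb' Hp Hq Hp' Hq'.
  assert (X : Q ((u ** u') ** (v ** v')) ((u ** (u' ** v)) ** v')).
  { rewrite Qtassoc. rewrite <- (Qtassoc u' v v'). rewrite <- Qtassoc. reflexivity. }
  rewrite X. rewrite <- Qassoc.
  rewrite Qinter by (simpl; lia). rewrite Qinter by (simpl; lia).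
  rewrite (Qinter (TId a) u (TSym b a') (u' ** v)) by (simpl; lia).
  rewrite (Qidl a u) by auto. rewrite (Qidl b' v') by auto.
  rewrite <- (Qsymnat v u' q p' b a') by auto.
  rewrite (Qinter u (TId p)) by (simpl; lia).
  rewrite (Qidr p u) by auto. rewrite (Qidr q' v') by auto.
  rewrite Qassoc. rewrite (Qsymsym q p' (q+p')) by auto.
  rewrite (Qidr (q + p') (v ** u')) by (simpl; lia).
  rewrite <- (Qtassoc u v u'), (Qtassoc (u ** v) u' v'). reflexivity.
Qed.

Definition Pi k1 k2 := (TId k1 ** discardn k2) ** (discardn k1 ** TId k2).

Lemma Qtid' k m n : k = m + n -> Q (TId k) (TId m ** TId n).
Proof. intros; symmetry; apply Qtid; auto. Qed.

Lemma WW K : Q ((TId 1 ** TSym 1 K) ** TId K ;; (TId 1 ** TSym K 1) ** TId K) (TId (1 + (1 + K) + K)).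
Proof.
  rewrite Qinter by (simpl; lia). rewrite Qinter by (simpl; lia).
  rewrite (Qsymsym 1 K (1+K)), !(Qidr _ (TId _)) by reflexivity.
  rewrite !(Qtid _ _ _ Logic.eq_refl). reflexivity.
Qed.

Lemma Proj n : forall k1 k2, k1 + k2 = n -> Q (copyn n ;; Pi k1 k2) (TId n).
Proof.
  induction n as [|K IH]; intros k1 k2 Hk.
  - assert (k1 = 0) by lia; assert (k2 = 0) by lia; subst. unfold Pi; simpl.
    rewrite !(Qtid 0 0 0) by reflexivity. apply Qidl. reflexivity.
  - destruct k1 as [|k1'].
    + simpl in Hk; subst k2. unfold Pi. cbn [discardn copyn].
      rewrite !Qtunitl. rewrite (Qtid' (S K) 1 K) by reflexivity.
      rewrite (M4 discard (discardn K) (TId 1) (TId K) 1 K 1 K 0 0 1 K) by tc.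
      rewrite Qassoc. rewrite <- (Qassoc ((TId 1 ** TSym 1 K) ** TId K)). rewrite WW.
      rewrite Qidl by tc.
      rewrite Qsym0r, (Qtid 0 1 1), (Qtid 1 K (1 + K)) by reflexivity.
      rewrite Qidr by tc.
      rewrite Qinter by tc. rewrite counitL.
      assert (IH' := IH 0 K Logic.eq_refl). unfold Pi in IH'. simpl in IH'.
      rewrite !Qtunitl in IH'. rewrite IH'. apply Qtid. reflexivity.
    + unfold Pi. cbn [discardn copyn].
      rewrite (Qtid' (S k1') 1 k1') by reflexivity.
      rewrite (Qtassoc (TId 1) (TId k1') (discardn k2)), (Qtassoc discard (discardn k1') (TId k2)).
      rewrite (M4 (TId 1) (TId k1' ** discardn k2) discard (discardn k1' ** TId k2) 1 K 1 K 1 k1' 0 k2) by tc.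
      rewrite Qassoc. rewrite <- (Qassoc ((TId 1 ** TSym 1 K) ** TId K)). rewrite WW.
      rewrite Qidl by tc.
      rewrite Qsym0l, (Qtid 1 k1' (1 + k1')), (Qtid (1 + k1') k2 (1 + k1' + k2)) by reflexivity.
      rewrite Qidr by tc.
      rewrite Qinter by tc. rewrite counitR.
      assert (IH' := IH k1' k2 ltac:(lia)). unfold Pi in IH'.
      rewrite IH'. apply Qtid. reflexivity.
Qed.
Lemma SP X n k1 k2 : wt X -> tdom X = n -> tcod X = k1 + k2 ->
  Q X (copyn n ;; ((X ;; (TId k1 ** discardn k2)) ** (X ;; (discardn k1 ** TId k2)))).
Proof.
  intros W Hd Hc.
  rewrite <- Qinter by tc. rewrite <- Qassoc.
  rewrite <- (Qcopynat X n (k1 + k2)) by auto.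
  rewrite Qassoc. fold (Pi k1 k2). rewrite (Proj (k1+k2) k1 k2) by reflexivity.
  rewrite Qidr by auto. reflexivity.
Qed.

Inductive ex := V (i : nat) | Z | O | Ad (a b : ex) | An (a b : ex).

Fixpoint C (n : nat) (e : ex) : term :=
  match e with
  | V i => if i <? n then discardn i ** (TId 1 ** discardn (n - S i)) else discardn n ;; zero
  | Z => discardn n ;; zero
  | O => discardn n ;; one
  | Ad a b => (copyn n ;; (C n a ** C n b)) ;; add
  | An a b => (copyn n ;; (C n a ** C n b)) ;; and
  end.

Lemma C_ty n e : wt (C n e) /\ tdom (C n e) = n /\ tcod (C n e) = 1.
Proof.
  pose proof (copyn_ty n); pose proof (discardn_ty n).
  induction e; simpl; autorewrite with tdb; try (intuition lia).
  destruct (Nat.ltb_spec i n); simpl; autorewrite with tdb; try (intuition lia).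
  pose proof (discardn_ty i); pose proof (discardn_ty (n - S i)). intuition lia.
Qed.
Lemma tdom_C n e : tdom (C n e) = n. Proof. apply C_ty. Qed.
Lemma tcod_C n e : tcod (C n e) = 1. Proof. apply C_ty. Qed.
Lemma wt_C n e : wt (C n e). Proof. apply C_ty. Qed.
Hint Rewrite tdom_C tcod_C : tdb.

Fixpoint L (n : nat) (es : list ex) : term :=
  match es with
  | [] => discardn n
  | e :: r => copyn n ;; (C n e ** L n r)
  end.
Lemma L_ty n es : wt (L n es) /\ tdom (L n es) = n /\ tcod (L n es) = length es.
Proof.
  induction es; simpl; autorewrite with tdb; auto using wt_discardn.
  destruct IHes as (?&?&?). repeat split; auto using wt_copyn, wt_C; lia.
Qed.
Lemma tdom_L n es : tdom (L n es) = n. Proof. apply L_ty. Qed.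
Lemma tcod_L n es : tcod (L n es) = length es. Proof. apply L_ty. Qed.
Lemma wt_L n es : wt (L n es). Proof. apply L_ty. Qed.
Hint Rewrite tdom_L tcod_L : tdb.

Lemma CLgen n Y : tdom Y = n -> Q (copyn n ;; (discardn n ** Y)) Y.
Proof.
  intros H.
  transitivity (copyn n ;; ((discardn n ** TId n) ;; (TId 0 ** Y))).
  { rewrite Qinter by tc. rewrite Qidr, Qidl by tc. reflexivity. }
  rewrite <- Qassoc. assert (P := Proj n 0 n Logic.eq_refl). unfold Pi in P.
  simpl in P. rewrite !Qtunitl in P. rewrite P. rewrite Qidl by tc. apply Qtunitl.
Qed.
Lemma CRgen n Y : tdom Y = n -> Q (copyn n ;; (Y ** discardn n)) Y.
Proof.
  intros H.
  transitivity (copyn n ;; ((TId n ** discardn n) ;; (Y ** TId 0))).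
  { rewrite Qinter by tc. rewrite Qidr, Qidl by tc. reflexivity. }
  rewrite <- Qassoc. assert (P := Proj n n 0 (Nat.add_0_r n)). unfold Pi in P.
  simpl in P. rewrite !Qtunitr in P. rewrite P. rewrite Qidl by tc. apply Qtunitr.
Qed.

Lemma Lsing n e : Q (L n [e]) (C n e).
Proof. simpl. apply CRgen. tc. Qed.

Lemma Lproj1 n es1 es2 :
  Q (L n (es1 ++ es2) ;; (TId (length es1) ** discardn (length es2))) (L n es1).
Proof.
  induction es1 as [|e r IH]; simpl.
  - rewrite Qtunitl. apply Qdiscnat; tc. apply wt_L.
  - rewrite (Qtid' (S (length r)) 1 (length r)) by reflexivity.
    rewrite Qtassoc, Qassoc, Qinter by tc. rewrite IH, Qidr by tc. reflexivity.
Qed.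

Lemma Lproj2 n es1 es2 :
  Q (L n (es1 ++ es2) ;; (discardn (length es1) ** TId (length es2))) (L n es2).
Proof.
  induction es1 as [|e r IH]; simpl.
  - rewrite Qtunitl. apply Qidr. tc.
  - rewrite Qtassoc, Qassoc, Qinter by tc. rewrite IH.
    rewrite <- disc1. rewrite (Qdiscnat (C n e) n 1) by (try apply wt_C; tc).
    apply CLgen. tc.
Qed.

Lemma Lsplit n es1 es2 : Q (L n (es1 ++ es2)) (copyn n ;; (L n es1 ** L n es2)).
Proof.
  rewrite (SP (L n (es1 ++ es2)) n (length es1) (length es2)) at 1 by (try apply wt_L; tc; rewrite length_app; auto).
  rewrite Lproj1, Lproj2. reflexivity.
Qed.

Lemma Lswap n es1 es2 m k : length es1 = m -> length es2 = k ->
  Q (L n (es1 ++ es2) ;; TSym m k) (L n (es2 ++ es1)).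
Proof.
  intros <- <-.
  assert (W : wt (L n (es1 ++ es2) ;; TSym (length es1) (length es2))).
  { simpl. autorewrite with tdb. rewrite length_app. pose proof (wt_L n (es1++es2)). intuition. }
  rewrite (SP (L n (es1 ++ es2) ;; TSym (length es1) (length es2)) n (length es2) (length es1))
    by (auto; tc).
  rewrite !Qassoc.
  rewrite <- (Qsymnat (discardn (length es1)) (TId (length es2)) 0 (length es2)) by tc.
  rewrite <- (Qsymnat (TId (length es1)) (discardn (length es2)) (length es1) 0) by tc.
  rewrite Qsym0l, Qsym0r, <- !Qassoc.
  rewrite Qidr by (tc; rewrite length_app; lia).
  rewrite Qidr by (tc; rewrite length_app; lia).
  rewrite Lproj1, Lproj2. symmetry. apply Lsplit.
Qed.
Fixpoint sym {A : Type} (gf : gen -> list A -> list A) (t : term) (Ls : list A) : list A :=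
  match t with
  | TGen g => gf g Ls
  | TId _ => Ls
  | TSym m _ => skipn m Ls ++ firstn m Ls
  | TComp f g => sym gf g (sym gf f Ls)
  | TTens f g => sym gf f (firstn (tdom f) Ls) ++ sym gf g (skipn (tdom f) Ls)
  end.

Lemma sym_len {A} (gf : gen -> list A -> list A) :
  (forall g Ls, length (gf g Ls) = gcod g) ->
  forall t Ls, wt t -> length Ls = tdom t -> length (sym gf t Ls) = tcod t.
Proof.
  intros Hg t; induction t; intros Ls W HL; simpl in *; auto.
  - rewrite length_app, length_skipn, length_firstn. lia.
  - destruct W as (W1&W2&E). apply IHt2; auto. rewrite IHt1; auto.
  - destruct W as (W1&W2). rewrite length_app, IHt1, IHt2; auto.
    + rewrite length_skipn; lia.
    + rewrite length_firstn; lia.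
Qed.

Definition gfE (g : gen) (Ls : list ex) : list ex :=
  match g with
  | gDiscard => []
  | gCopy => match Ls with [a] => [a; a] | _ => [Z; Z] end
  | gZero => [Z]
  | gOne => [O]
  | gAdd => match Ls with [a; b] => [Ad a b] | _ => [Z] end
  | gAnd => match Ls with [a; b] => [An a b] | _ => [Z] end
  end.

Lemma gfE_len g Ls : length (gfE g Ls) = gcod g.
Proof.
  destruct g; simpl; auto;
  repeat match goal with |- context [match ?l with _ => _ end] => destruct l end; reflexivity.
Qed.

Lemma SL n t : wt t -> forall es, length es = tdom t -> Q (L n es ;; t) (L n (sym gfE t es)).
Proof.
  induction t; intros W es HL; simpl in *.
  - destruct g; simpl in HL.
    + destruct es as [|a [|]]; simpl in HL; try lia. simpl gfE.
      rewrite <- disc1. apply (Qdiscnat (L n [a])); [apply wt_L | tc | tc].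
    + destruct es as [|a [|]]; simpl in HL; try lia. simpl gfE.
      rewrite Lsing. rewrite <- copyn1.
      rewrite (Qcopynat (C n a) n 1) by tc.
      change (L n [a;a]) with (copyn n ;; (C n a ** L n [a])). rewrite Lsing. reflexivity.
    + destruct es; simpl in HL; try lia. simpl gfE. rewrite Lsing. reflexivity.
    + destruct es as [|a [|b [|]]]; simpl in HL; try lia. simpl gfE.
      rewrite Lsing. change (L n [a;b]) with (copyn n ;; (C n a ** L n [b])).
      rewrite Lsing. reflexivity.
    + destruct es; simpl in HL; try lia. simpl gfE. rewrite Lsing. reflexivity.
    + destruct es as [|a [|b [|]]]; simpl in HL; try lia. simpl gfE.
      rewrite Lsing. change (L n [a;b]) with (copyn n ;; (C n a ** L n [b])).
      rewrite Lsing. reflexivity.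
  - apply Qidr. tc.
  - rewrite <- (firstn_skipn m es) at 1. apply Lswap.
    + rewrite length_firstn; lia.
    + rewrite length_skipn; lia.
  - destruct W as (W1&W2&E). rewrite <- Qassoc. rewrite IHt1 by auto.
    apply IHt2; auto. rewrite (sym_len gfE gfE_len); auto.
  - destruct W as (W1&W2).
    rewrite <- (firstn_skipn (tdom t1) es) at 1. rewrite Lsplit.
    rewrite Qassoc, Qinter by (tc; rewrite length_firstn; lia).
    rewrite IHt1, IHt2 by (auto; try rewrite length_firstn; try rewrite length_skipn; lia).
    symmetry; apply Lsplit.
Qed.
Section Alg.
Variable n : nat.
Definition Ev (a b : ex) : Prop := Q (C n a) (C n b).

Instance Ev_Equiv : Equivalence Ev.
Proof. unfold Ev; split; intro; intros; [reflexivity | symmetry; auto | etransitivity; eauto]. Qed.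
Instance Ad_Ev : Proper (Ev ==> Ev ==> Ev) Ad.
Proof. intros a a' Ha b b' Hb. unfold Ev in *. simpl. rewrite Ha, Hb. reflexivity. Qed.
Instance An_Ev : Proper (Ev ==> Ev ==> Ev) An.
Proof. intros a a' Ha b b' Hb. unfold Ev in *. simpl. rewrite Ha, Hb. reflexivity. Qed.

Lemma law lhs rhs es x y : eqE lhs rhs -> length es = tdom lhs ->
  sym gfE lhs es = [x] -> sym gfE rhs es = [y] -> Ev x y.
Proof.
  intros E HL H1 H2. unfold Ev.
  destruct (eqE_wt _ _ E) as (W1&W2&D&_).
  rewrite <- !Lsing. rewrite <- H1, <- H2.
  rewrite <- (SL n lhs W1 es HL), <- (SL n rhs W2 es ltac:(lia)).
  rewrite (Q_eqE _ _ E). reflexivity.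
Qed.

Lemma ad_comm a b : Ev (Ad a b) (Ad b a).
Proof. symmetry. apply (law _ _ [a;b] _ _ E_add_comm); reflexivity. Qed.
Lemma ad_assoc a b c : Ev (Ad (Ad a b) c) (Ad a (Ad b c)).
Proof. apply (law _ _ [a;b;c] _ _ E_add_assoc); reflexivity. Qed.
Lemma ad_0l a : Ev (Ad Z a) a.
Proof. apply (law _ _ [a] _ _ E_add_unitl); reflexivity. Qed.
Lemma an_comm a b : Ev (An a b) (An b a).
Proof. symmetry. apply (law _ _ [a;b] _ _ E_and_comm); reflexivity. Qed.
Lemma an_assoc a b c : Ev (An (An a b) c) (An a (An b c)).
Proof. apply (law _ _ [a;b;c] _ _ E_and_assoc); reflexivity. Qed.
Lemma an_1l a : Ev (An O a) a.
Proof. apply (law _ _ [a] _ _ E_and_unitl); reflexivity. Qed.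
Lemma an_idem a : Ev (An a a) a.
Proof. apply (law _ _ [a] _ _ E_and_idem); reflexivity. Qed.
Lemma ad_nil a : Ev (Ad a a) Z.
Proof. apply (law _ _ [a] _ _ E_add_nil); reflexivity. Qed.
Lemma distr a b c : Ev (An a (Ad b c)) (Ad (An a b) (An a c)).
Proof. apply (law _ _ [a;b;c] _ _ E_distr); reflexivity. Qed.
Lemma distr_r a b c : Ev (An (Ad b c) a) (Ad (An b a) (An c a)).
Proof. rewrite (an_comm (Ad b c) a), distr, (an_comm a b), (an_comm a c). reflexivity. Qed.
Lemma ad_0r a : Ev (Ad a Z) a. Proof. rewrite ad_comm. apply ad_0l. Qed.
Lemma an_1r a : Ev (An a O) a. Proof. rewrite an_comm. apply an_1l. Qed.
Lemma an_0l a : Ev (An Z a) Z.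
Proof.
  transitivity (An (Ad Z Z) a). { rewrite (ad_0l Z). reflexivity. }
  rewrite distr_r. apply ad_nil.
Qed.
Lemma an_0r a : Ev (An a Z) Z. Proof. rewrite an_comm. apply an_0l. Qed.

Lemma an_dup y a b : Ev (An y y) y -> Ev (An y (An a b)) (An (An y a) (An y b)).
Proof.
  intros Hy. symmetry.
  rewrite (an_assoc y a (An y b)). rewrite <- (an_assoc a y b). rewrite (an_comm a y).
  rewrite (an_assoc y a b). rewrite <- (an_assoc y y (An a b)). rewrite Hy. reflexivity.
Qed.

Fixpoint subst (k : nat) (c : ex) (e : ex) : ex :=
  match e with
  | V j => if j =? k then c else V j
  | Z => Z | O => O
  | Ad a b => Ad (subst k c a) (subst k c b)
  | An a b => An (subst k c a) (subst k c b)
  end.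

Lemma mask y k c : Ev (An y y) y -> Ev (An y (V k)) (An y c) ->
  forall e, Ev (An y e) (An y (subst k c e)).
Proof.
  intros Hy Hk e; induction e; simpl.
  - destruct (Nat.eqb_spec i k); subst; [exact Hk | reflexivity].
  - reflexivity.
  - reflexivity.
  - rewrite !distr, IHe1, IHe2. reflexivity.
  - rewrite !(an_dup y) by exact Hy. rewrite IHe1, IHe2. reflexivity.
Qed.

Lemma shannon k e :
  Ev e (Ad (An (V k) (subst k O e)) (An (Ad (V k) O) (subst k Z e))).
Proof.
  rewrite <- (mask (V k) k O (an_idem _)).
  2:{ rewrite an_idem, an_1r. reflexivity. }
  rewrite <- (mask (Ad (V k) O) k Z).
  - rewrite <- distr_r. rewrite <- ad_assoc, ad_nil, ad_0l, an_1l. reflexivity.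
  - rewrite distr_r, an_1l, distr, an_idem, an_1r, ad_nil, ad_0l. reflexivity.
  - rewrite distr_r, an_idem, an_1l, ad_nil, an_0r. reflexivity.
Qed.
Fixpoint occ (i : nat) (e : ex) : Prop :=
  match e with
  | V j => i = j
  | Z | O => False
  | Ad a b | An a b => occ i a \/ occ i b
  end.
Fixpoint sf (e : ex) : Prop :=
  match e with
  | Ad a b => sf a /\ sf b
  | An a b => sf a /\ sf b /\ (forall i, occ i a -> occ i b -> False)
  | _ => True
  end.

Lemma closed_const e : (forall i, occ i e -> False) -> Ev e Z \/ Ev e O.
Proof.
  induction e; simpl; intros H.
  - exfalso; eapply H; eauto.
  - left; reflexivity.
  - right; reflexivity.
  - assert (A1 : forall i, occ i e1 -> False) by (intros i Hi; apply (H i); auto).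
    assert (A2 : forall i, occ i e2 -> False) by (intros i Hi; apply (H i); auto).
    destruct (IHe1 A1) as [H1|H1]; destruct (IHe2 A2) as [H2|H2]; rewrite H1, H2.
    + left; apply ad_0l.
    + right; apply ad_0l.
    + right; apply ad_0r.
    + left; apply ad_nil.
  - assert (A1 : forall i, occ i e1 -> False) by (intros i Hi; apply (H i); auto).
    assert (A2 : forall i, occ i e2 -> False) by (intros i Hi; apply (H i); auto).
    destruct (IHe1 A1) as [H1|H1]; destruct (IHe2 A2) as [H2|H2]; rewrite H1, H2.
    + left; apply an_0l.
    + left; apply an_0l.
    + left; apply an_0r.
    + right; apply an_1l.
Qed.

Lemma occ_subst k c e i : (c = Z \/ c = O) -> occ i (subst k c e) -> occ i e /\ i <> k.
Proof.
  intros Hc; induction e; simpl; try tauto.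
  - destruct (Nat.eqb_spec i0 k); subst.
    + destruct Hc; subst; simpl; tauto.
    + simpl. intros ->. auto.
Qed.

Lemma make_safe k : forall e, (forall i, occ i e -> i < k) ->
  exists e', sf e' /\ (forall i, occ i e' -> i < k) /\ Ev e e'.
Proof.
  induction k; intros e He.
  - destruct (closed_const e) as [H|H].
    + intros i Hi; specialize (He i Hi); lia.
    + exists Z; simpl; intuition.
    + exists O; simpl; intuition.
  - assert (H1 : forall i, occ i (subst k O e) -> i < k).
    { intros i Hi. destruct (occ_subst k O e i (or_intror Logic.eq_refl) Hi) as [H Hne]. specialize (He i H). lia. }
    assert (H0 : forall i, occ i (subst k Z e) -> i < k).
    { intros i Hi. destruct (occ_subst k Z e i (or_introl Logic.eq_refl) Hi) as [H Hne]. specialize (He i H). lia. }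
    destruct (IHk _ H1) as (e1 & S1 & B1 & E1).
    destruct (IHk _ H0) as (e0 & S0 & B0 & E0).
    exists (Ad (An (V k) e1) (An (Ad (V k) O) e0)). split; [|split].
    + simpl. repeat split; auto.
      * intros i -> Hi. specialize (B1 _ Hi). lia.
      * intros i [->|[]] Hi. specialize (B0 _ Hi). lia.
    + simpl. intros i [[->|Hi]|[[->|[]]|Hi]]; try lia.
      * specialize (B1 _ Hi); lia.
      * specialize (B0 _ Hi); lia.
    + rewrite (shannon k e), E1, E0. reflexivity.
Qed.
End Alg.

Lemma disc_add a b : Q (discardn a ** discardn b) (discardn (a + b)).
Proof.
  induction a; simpl. apply Qtunitl. rewrite Qtassoc, IHa. reflexivity.
Qed.

Lemma IdL N : forall b a, a + b = N -> Q (discardn a ** TId b) (L N (map V (seq a b))).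
Proof.
  induction b as [|b IH]; intros a Hab; simpl.
  - rewrite Qtunitr. replace a with N by lia. reflexivity.
  - assert (W : wt (discardn a ** TId (S b))) by (simpl; auto using wt_discardn).
    rewrite (SP (discardn a ** TId (S b)) N 1 b W) by tc.
    rewrite <- (IH (S a)) by lia.
    transitivity (copyn N ;; (C N (V a) ** (discardn (S a) ** TId b))); [|reflexivity].
    assert (E1 : Q (discardn a ** TId (S b) ;; (TId 1 ** discardn b)) (C N (V a))).
    { simpl. destruct (Nat.ltb_spec a N); [|lia].
      replace (N - S a) with b by lia.
      transitivity ((discardn a ** TId (S b)) ;; (TId 0 ** (TId 1 ** discardn b))).
      { rewrite Qtunitl. reflexivity. }
      rewrite Qinter by tc. rewrite Qidr, Qidl by tc. reflexivity. }
    assert (E2 : Q (discardn a ** TId (S b) ;; (discardn 1 ** TId b)) (discardn (S a) ** TId b)).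
    { transitivity ((discardn a ** TId (S b)) ;; (TId 0 ** (discardn 1 ** TId b))).
      { rewrite Qtunitl. reflexivity. }
      rewrite Qinter by tc. rewrite Qidr, Qidl by tc.
      rewrite <- Qtassoc, disc_add. replace (a + 1) with (S a) by lia. reflexivity. }
    rewrite E1, E2. reflexivity.
Qed.

Lemma Lcongr n es es' : Forall2 (Ev n) es es' -> Q (L n es) (L n es').
Proof. induction 1; simpl. reflexivity. rewrite IHForall2. unfold Ev in H. rewrite H. reflexivity. Qed.
Definition gfL (g : gen) (Ls : list (list nat)) : list (list nat) := repeat (concat Ls) (gcod g).

Fixpoint ASafe (t : term) (Ls : list (list nat)) : Prop :=
  match t with
  | TGen gAnd => match Ls with [a; b] => forall i, In i a -> In i b -> False | _ => True end
  | TGen _ | TId _ | TSym _ _ => True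
  | TComp f g => ASafe f Ls /\ ASafe g (sym gfL f Ls)
  | TTens f g => ASafe f (firstn (tdom f) Ls) /\ ASafe g (skipn (tdom f) Ls)
  end.

Definition closedL (oc : list (gen * list nat * list nat)) (lab : nat -> list nat) : Prop :=
  forall g i o, In (g, i, o) oc -> forall x y, In x i -> In y o -> incl (lab x) (lab y).
Definition andsafe (oc : list (gen * list nat * list nat)) (lab : nat -> list nat) : Prop :=
  forall p q o, In (gAnd, [p; q], o) oc -> forall i, In i (lab p) -> In i (lab q) -> False.

Lemma in_firstn' {A} n (l : list A) x : In x (firstn n l) -> In x l.
Proof. intros H. rewrite <- (firstn_skipn n l). apply in_or_app; auto. Qed.
Lemma in_skipn' {A} n (l : list A) x : In x (skipn n l) -> In x l.
Proof. intros H. rewrite <- (firstn_skipn n l). apply in_or_app; auto. Qed.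

Lemma flat_bounds t : forall ins fr o oc fr', (forall w, In w ins -> w < fr) ->
  flat t ins fr = (o, oc, fr') ->
  fr <= fr' /\ (forall w, In w o -> w < fr') /\
  (forall g i o', In (g, i, o') oc -> (forall w, In w i -> w < fr') /\ (forall w, In w o' -> w < fr')).
Proof.
  induction t; intros ins fr o oc fr' Hin Hf; simpl in Hf.
  - inversion Hf; subst. split; [lia|split].
    + intros w Hw. apply in_seq in Hw. lia.
    + intros g' i o' [H|[]]. inversion H; subst. split.
      * intros w Hw. specialize (Hin w Hw). lia.
      * intros w Hw. apply in_seq in Hw. lia.
  - inversion Hf; subst. split; [lia| split; [auto | intros ? ? ? []]].
  - inversion Hf; subst. split; [lia|split].
    + intros w Hw. apply in_app_or in Hw as [Hw|Hw]; apply Hin; eauto using in_firstn', in_skipn'.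
    + intros ? ? ? [].
  - destruct (flat t1 ins fr) as [[o1 oc1] fr1] eqn:E1.
    destruct (flat t2 o1 fr1) as [[o2 oc2] fr2] eqn:E2. inversion Hf; subst.
    destruct (IHt1 _ _ _ _ _ Hin E1) as (A1&B1&C1).
    destruct (IHt2 _ _ _ _ _ B1 E2) as (A2&B2&C2).
    split; [lia|split].
    + intros w Hw. auto.
    + intros g0 i o' H. apply in_app_or in H as [H|H].
      * destruct (C1 _ _ _ H) as (X&Y). split; intros w Hw; [specialize (X w Hw)|specialize (Y w Hw)]; lia.
      * apply (C2 _ _ _ H).
  - destruct (flat t1 (firstn (tdom t1) ins) fr) as [[o1 oc1] fr1] eqn:E1.
    destruct (flat t2 (skipn (tdom t1) ins) fr1) as [[o2 oc2] fr2] eqn:E2. inversion Hf; subst.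
    destruct (IHt1 _ _ _ _ _ (fun w H => Hin w (in_firstn' _ _ _ H)) E1) as (A1&B1&C1).
    assert (Hin2 : forall w, In w (skipn (tdom t1) ins) -> w < fr1).
    { intros w H. specialize (Hin w (in_skipn' _ _ _ H)). lia. }
    destruct (IHt2 _ _ _ _ _ Hin2 E2) as (A2&B2&C2).
    split; [lia|split].
    + intros w Hw. apply in_app_or in Hw as [Hw|Hw]; [specialize (B1 w Hw); lia | auto].
    + intros g0 i o' H. apply in_app_or in H as [H|H].
      * destruct (C1 _ _ _ H) as (X&Y). split; intros w Hw; [specialize (X w Hw)|specialize (Y w Hw)]; lia.
      * apply (C2 _ _ _ H).
Qed.
Lemma map_seq_const (lab : nat -> list nat) v c : forall fr, (forall w, fr <= w -> lab w = v) ->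
  map lab (seq fr c) = repeat v c.
Proof. induction c; intros fr H; simpl; auto. rewrite H by lia. f_equal. apply IHc. intros; apply H; lia. Qed.

Lemma flat_lab t : forall ins fr lab0 o oc fr', (forall w, In w ins -> w < fr) ->
  flat t ins fr = (o, oc, fr') ->
  exists lab, (forall w, w < fr -> lab w = lab0 w) /\ map lab o = sym gfL t (map lab0 ins) /\
    closedL oc lab /\ (ASafe t (map lab0 ins) -> andsafe oc lab).
Proof.
  induction t; intros ins fr lab0 o oc fr' Hin Hf; simpl in Hf.
  - inversion Hf; subst.
    exists (fun w => if fr <=? w then concat (map lab0 ins) else lab0 w). split; [|split; [|split]].
    + intros w Hw. destruct (Nat.leb_spec fr w); auto; lia.
    + simpl. unfold gfL. apply map_seq_const. intros w Hw. destruct (Nat.leb_spec fr w); auto; lia.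
    + intros g' i o' [H|[]] x y Hx Hy. inversion H; subst.
      apply in_seq in Hy. specialize (Hin x Hx).
      destruct (Nat.leb_spec fr x); try lia. destruct (Nat.leb_spec fr y); try lia.
      intros z Hz. apply in_concat. exists (lab0 x). split; auto. apply in_map; auto.
    + intros HA p q o' [H|[]]. inversion H; subst. simpl in HA.
      assert (p < fr) by (apply Hin; simpl; auto). assert (q < fr) by (apply Hin; simpl; auto).
      destruct (Nat.leb_spec fr p); try lia. destruct (Nat.leb_spec fr q); try lia. exact HA.
  - inversion Hf; subst. exists lab0. split; [auto|split; [auto|split]].
    + intros ? ? ? [].
    + intros _ ? ? ? [].
  - inversion Hf; subst. exists lab0. split; [auto|split; [|split]].
    + simpl. rewrite map_app, <- firstn_map, <- skipn_map. reflexivity.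
    + intros ? ? ? [].
    + intros _ ? ? ? [].
  - destruct (flat t1 ins fr) as [[o1 oc1] fr1] eqn:E1.
    destruct (flat t2 o1 fr1) as [[o2 oc2] fr2] eqn:E2. inversion Hf; subst.
    destruct (flat_bounds _ _ _ _ _ _ Hin E1) as (A1&B1&C1).
    destruct (IHt1 _ _ lab0 _ _ _ Hin E1) as (lab1&L1&M1&N1&S1).
    destruct (IHt2 _ _ lab1 _ _ _ B1 E2) as (lab2&L2&M2&N2&S2).
    exists lab2. split; [|split; [|split]].
    + intros w Hw. rewrite L2 by lia. auto.
    + rewrite M2. simpl. rewrite M1. reflexivity.
    + intros g0 i o' H x y Hx Hy. apply in_app_or in H as [H|H].
      * destruct (C1 _ _ _ H) as (X&Y). rewrite !L2 by auto. eapply N1; eauto.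
      * eapply N2; eauto.
    + intros [HA1 HA2] p q o' H. apply in_app_or in H as [H|H].
      * destruct (C1 _ _ _ H) as (X&Y). rewrite !L2 by (apply X; simpl; auto). eapply S1; eauto.
      * eapply S2; eauto. rewrite M1. exact HA2.
  - destruct (flat t1 (firstn (tdom t1) ins) fr) as [[o1 oc1] fr1] eqn:E1.
    destruct (flat t2 (skipn (tdom t1) ins) fr1) as [[o2 oc2] fr2] eqn:E2. inversion Hf; subst.
    assert (Hin1 : forall w, In w (firstn (tdom t1) ins) -> w < fr) by eauto using in_firstn'.
    destruct (flat_bounds _ _ _ _ _ _ Hin1 E1) as (A1&B1&C1).
    assert (Hin2 : forall w, In w (skipn (tdom t1) ins) -> w < fr1).
    { intros w H. specialize (Hin w (in_skipn' _ _ _ H)). lia. }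
    destruct (IHt1 _ _ lab0 _ _ _ Hin1 E1) as (lab1&L1&M1&N1&S1).
    destruct (IHt2 _ _ lab1 _ _ _ Hin2 E2) as (lab2&L2&M2&N2&S2).
    assert (EQ2 : map lab1 (skipn (tdom t1) ins) = map lab0 (skipn (tdom t1) ins)).
    { apply map_ext_in. intros w Hw. apply L1. apply Hin, (in_skipn' _ _ _ Hw). }
    exists lab2. split; [|split; [|split]].
    + intros w Hw. rewrite L2 by lia. auto.
    + simpl. rewrite map_app, M2, EQ2, firstn_map, skipn_map. rewrite <- M1.
      f_equal. apply map_ext_in. intros w Hw. apply L2. auto.
    + intros g0 i o' H x y Hx Hy. apply in_app_or in H as [H|H].
      * destruct (C1 _ _ _ H) as (X&Y). rewrite !L2 by auto. eapply N1; eauto.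
      * eapply N2; eauto.
    + intros [HA1 HA2] p q o' H. rewrite firstn_map in HA1. rewrite skipn_map in HA2. apply in_app_or in H as [H|H].
      * destruct (C1 _ _ _ H) as (X&Y). rewrite !L2 by (apply X; simpl; auto). eapply S1; eauto.
      * eapply S2; eauto. rewrite EQ2. exact HA2.
Qed.

Lemma safe_of t : ASafe t (map (fun i => [i]) (seq 0 (tdom t))) -> safe t.
Proof.
  intros HA. unfold safe, occs.
  destruct (flat t (seq 0 (tdom t)) (tdom t)) as [[o oc] fr'] eqn:E. simpl.
  assert (Hin : forall w, In w (seq 0 (tdom t)) -> w < tdom t) by (intros w Hw; apply in_seq in Hw; lia).
  destruct (flat_lab t _ _ (fun i => [i]) _ _ _ Hin E) as (lab&L0&_&Cl&S).
  specialize (S HA).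
  assert (R0 : forall x y, reach t x y -> incl (lab x) (lab y)).
  { intros x y Hr. induction Hr as [x y Hxy| x | x y z _ IH1 _ IH2].
    - destruct Hxy as (g & ins & outs & Ho & Hx & Hy). unfold occs in Ho. rewrite E in Ho.
      apply (Cl g ins outs Ho x y Hx Hy).
    - intros a Ha; auto.
    - intros a Ha; auto. }
  assert (R : forall i w, i < tdom t -> reach t i w -> In i (lab w)).
  { intros i w Hi Hr. apply (R0 _ _ Hr). rewrite L0 by auto. simpl; auto. }
  intros p q outs Ho i Hi [Hp Hq]. apply (S p q outs Ho i); apply R; auto.
Qed.
Lemma firstn_app_len {A} (a b : list A) k : length a = k -> firstn k (a ++ b) = a.
Proof. intros <-. rewrite firstn_app, firstn_all, Nat.sub_diag. simpl. apply app_nil_r. Qed.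
Lemma skipn_app_len {A} (a b : list A) k : length a = k -> skipn k (a ++ b) = b.
Proof. intros <-. rewrite skipn_app, skipn_all, Nat.sub_diag. reflexivity. Qed.

Lemma symL_discardn' k Ls : sym gfL (discardn k) Ls = skipn k Ls.
Proof.
  revert Ls; induction k as [|k IH]; intros Ls; simpl; auto.
  rewrite IH. destruct Ls; simpl; auto. destruct k; auto.
Qed.
Lemma symL_discardn k Ls : length Ls <= k -> sym gfL (discardn k) Ls = [].
Proof. intros H. rewrite symL_discardn'. apply skipn_all2. auto. Qed.
Lemma ASafe_discardn k Ls : ASafe (discardn k) Ls.
Proof. revert Ls; induction k; intros Ls; simpl; auto. Qed.
Lemma symL_copyn k Ls : length Ls = k -> sym gfL (copyn k) Ls = Ls ++ Ls.
Proof.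
  revert Ls; induction k; intros Ls HL.
  - destruct Ls; simpl in *; auto; lia.
  - destruct Ls as [|l Ls]; simpl in HL; try lia. injection HL as HL.
    cbn [copyn sym]. simpl tdom. cbn [firstn skipn]. unfold gfL at 1. simpl.
    rewrite IHk by auto. rewrite app_nil_r.
    rewrite firstn_app_len, skipn_app_len by auto. simpl.
    rewrite <- app_assoc. reflexivity.
Qed.
Lemma ASafe_copyn k Ls : ASafe (copyn k) Ls.
Proof. revert Ls; induction k; intros Ls; simpl; auto. Qed.

Lemma firstn1_skipn {A} i (Ls : list A) d : i < length Ls -> firstn 1 (skipn i Ls) = [nth i Ls d].
Proof. revert Ls; induction i; intros [|x Ls] H; simpl in *; try lia; auto. apply IHi; lia. Qed.

Section SafeC.
Variable n : nat.
Lemma symL_C e Ls : length Ls = n -> exists l, sym gfL (C n e) Ls = [l] /\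
  forall x, In x l -> exists i, occ i e /\ i < n /\ In x (nth i Ls []).
Proof.
  intros HL. induction e; simpl C.
  - destruct (Nat.ltb_spec i n).
    + exists (nth i Ls []). split.
      * cbn [sym]. rewrite tdom_discardn. simpl tdom.
        rewrite !symL_discardn by (rewrite ?length_firstn, ?length_skipn; lia).
        simpl. rewrite app_nil_r. apply firstn1_skipn. lia.
      * intros x Hx. exists i. simpl; auto.
    + exists []. split; [cbn [sym]; rewrite symL_discardn by lia; reflexivity | intros _ []].
  - exists []. split; [cbn [sym]; rewrite symL_discardn by lia; reflexivity | intros _ []].
  - exists []. split; [cbn [sym]; rewrite symL_discardn by lia; reflexivity | intros _ []].
  - destruct IHe1 as (l1&E1&H1). destruct IHe2 as (l2&E2&H2).
    exists (l1 ++ (l2 ++ [])). split.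
    + cbn [sym]. rewrite symL_copyn, tdom_C, firstn_app_len, skipn_app_len, E1, E2 by auto. reflexivity.
    + intros x Hx. rewrite app_nil_r in Hx. apply in_app_or in Hx as [Hx|Hx].
      * destruct (H1 x Hx) as (i&?&?&?). exists i; simpl; auto.
      * destruct (H2 x Hx) as (i&?&?&?). exists i; simpl; auto.
  - destruct IHe1 as (l1&E1&H1). destruct IHe2 as (l2&E2&H2).
    exists (l1 ++ (l2 ++ [])). split.
    + cbn [sym]. rewrite symL_copyn, tdom_C, firstn_app_len, skipn_app_len, E1, E2 by auto. reflexivity.
    + intros x Hx. rewrite app_nil_r in Hx. apply in_app_or in Hx as [Hx|Hx].
      * destruct (H1 x Hx) as (i&?&?&?). exists i; simpl; auto.
      * destruct (H2 x Hx) as (i&?&?&?). exists i; simpl; auto.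
Qed.

Lemma ASafe_C e Ls : sf e -> length Ls = n ->
  (forall x i j, i < n -> j < n -> In x (nth i Ls []) -> In x (nth j Ls []) -> i = j) ->
  ASafe (C n e) Ls.
Proof.
  intros Hs HL HD. induction e; simpl C.
  - destruct (Nat.ltb_spec i n); simpl; rewrite ?tdom_discardn; auto using ASafe_discardn.
  - simpl; auto using ASafe_discardn.
  - simpl; auto using ASafe_discardn.
  - destruct Hs as (S1&S2). cbn [ASafe]. rewrite symL_copyn, tdom_C, firstn_app_len, skipn_app_len by auto.
    repeat split; auto using ASafe_copyn.
  - destruct Hs as (S1&S2&S3). cbn [ASafe]. rewrite symL_copyn, tdom_C, firstn_app_len, skipn_app_len by auto.
    repeat split; auto using ASafe_copyn.
    destruct (symL_C e1 Ls HL) as (l1&E1&H1). destruct (symL_C e2 Ls HL) as (l2&E2&H2).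
    cbn [sym]. rewrite symL_copyn, tdom_C, firstn_app_len, skipn_app_len, E1, E2 by auto. simpl.
    intros x X1 X2. destruct (H1 x X1) as (i&Oi&Li&Ii). destruct (H2 x X2) as (j&Oj&Lj&Ij).
    assert (i = j) by (eapply HD; eauto). subst. eapply S3; eauto.
Qed.

Lemma ASafe_L es Ls : Forall sf es -> length Ls = n ->
  (forall x i j, i < n -> j < n -> In x (nth i Ls []) -> In x (nth j Ls []) -> i = j) ->
  ASafe (L n es) Ls.
Proof.
  intros Hs HL HD. induction Hs; simpl.
  - apply ASafe_discardn.
  - rewrite symL_copyn, tdom_C, firstn_app_len, skipn_app_len by auto.
    repeat split; auto using ASafe_copyn, ASafe_C.
Qed.
End SafeC.

Lemma nth_sing n i : i < n -> nth i (map (fun i => [i]) (seq 0 n)) [] = [i].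
Proof.
  intros H. rewrite (nth_indep _ [] [0]) by (rewrite length_map, length_seq; lia).
  rewrite (map_nth (fun i => [i]) (seq 0 n) 0 i). rewrite seq_nth by lia. reflexivity.
Qed.

Lemma safe_L n es : Forall sf es -> safe (L n es).
Proof.
  intros Hs. apply safe_of. rewrite tdom_L. apply ASafe_L; auto.
  - rewrite length_map, length_seq. auto.
  - intros x i j Hi Hj. rewrite !nth_sing by auto. simpl. intros [->|[]] [->|[]]. auto.
Qed.
Lemma occ_bound e : exists k, forall i, occ i e -> i < k.
Proof.
  induction e; simpl.
  - exists (S i). intros; lia.
  - exists 0; tauto.
  - exists 0; tauto.
  - destruct IHe1 as (k1&H1), IHe2 as (k2&H2). exists (k1 + k2).
    intros i [H|H]; [specialize (H1 _ H)|specialize (H2 _ H)]; lia.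
  - destruct IHe1 as (k1&H1), IHe2 as (k2&H2). exists (k1 + k2).
    intros i [H|H]; [specialize (H1 _ H)|specialize (H2 _ H)]; lia.
Qed.

Lemma make_safe_list n es : exists es', Forall sf es' /\ Forall2 (Ev n) es es'.
Proof.
  induction es as [|e es IH].
  - exists []; auto.
  - destruct IH as (es'&S&F). destruct (occ_bound e) as (k&Hk).
    destruct (make_safe n k e Hk) as (e'&S'&_&E').
    exists (e' :: es'); auto.
Qed.

Theorem mainTheorem4 (c : term) : wt c -> exists d : term, safe d /\ eqE c d.
Proof.
  intros W.
  destruct (make_safe_list (tdom c) (sym gfE c (map V (seq 0 (tdom c))))) as (es'&S&F).
  exists (L (tdom c) es'). split; [apply safe_L; auto|].
  apply eqE_Q; auto.
  rewrite <- (Lcongr _ _ _ F).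
  rewrite <- (SL (tdom c) c W) by (rewrite length_map, length_seq; auto).
  rewrite <- (IdL (tdom c) (tdom c) 0) by reflexivity.
  simpl discardn. rewrite Qtunitl. symmetry. apply Qidl. reflexivity.
Qed.
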